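(* Let $q\ge 2$ be a prime power. For every $a\in\mathbb{F}_q\cup\{q\}$ and every $c\in\mathbb{F}_q$, any two distinct vertices of $\{(a,t,c)_1: t\in\mathbb{F}_q\}$ are at distance at least $6$ in $B'_q$.
   Context: $\mathbb{F}_q$ is the field with $q$ elements; $q$ is also used as a formal symbol not in $\mathbb{F}_q$. $B_q$ is the bipartite graph with parts $\{(x,y,z)_0: x,y,z\in\mathbb{F}_q\}$ and $\{(a,b,c)_1: a,b,c\in\mathbb{F}_q\}$, in which $(a,b,c)_1$ is adjacent exactly to $(j,\,aj+b,\,a^2j+2ab+c)_0$, $j\in\mathbb{F}_q$. $B'_q$ is obtained from $B_q$ by adding $q^2$ new vertices $(q,b,c)_1$, $b,c\in\mathbb{F}_q$, to the second part, where $(q,b,c)_1$ is adjacent exactly to $(c,b,j)_0$, $j\in\mathbb{F}_q$. *)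

(* Defs.v *)
From HB Require Import structures.
From mathcomp Require Import all_boot all_order all_algebra all_field.
Set Implicit Arguments. Unset Strict Implicit. Unset Printing Implicit Defensive.
Import GRing.Theory.
Local Open Scope ring_scope.

(* Vertices of B'_q over a finite field F (q = #|F|, a prime power >= 2).
   Part 0: inl (x,y,z)  ~ (x,y,z)_0.
   Part 1: inr (a,b,c)  ~ (a,b,c)_1, where a : option F, with
           a = Some a' for a' in F_q and a = None for the formal symbol q. *)
Definition Bvert (F : finFieldType) : finType :=
  ((F * F * F) + (option F * F * F))%type.

Definition adj10 (F : finFieldType) (a : option F) (b c x y z : F) : bool :=
  match a with
  | Some a' => (y == a' * x + b) && (z == a' ^+ 2 * x + 2 * a' * b + c)
  | None => (x == c) && (y == b)
  end.

Definition Badj (F : finFieldType) : rel (Bvert F) :=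
  fun u v =>
    match u, v with
    | inl (x, y, z), inr (a, b, c) => adj10 a b c x y z
    | inr (a, b, c), inl (x, y, z) => adj10 a b c x y z
    | _, _ => false
    end.

Definition dist_ge (F : finFieldType) (u v : Bvert F) (d : nat) : Prop :=
  forall p : seq (Bvert F), path (@Badj F) u p -> last u p = v -> (d <= size p)%N.

(* Main.v *)
Require Import Defs.
From HB Require Import structures.
From mathcomp Require Import all_boot all_order all_algebra all_field.
From mathcomp Require Import ring.
Import GRing.Theory.
Local Open Scope ring_scope.

Lemma L2 (F : finFieldType) (a : option F) (t t' c x y z : F) :
  adj10 a t c x y z -> adj10 a t' c x y z -> t = t'.
Proof.
case: a => [a|] /=.
  move=> /andP[/eqP h1 _] /andP[/eqP h2 _].
  by move: h1; rewrite h2 => /addrI.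
by move=> /andP[_ /eqP ->] /andP[_ /eqP ->].
Qed.

Lemma L4 (F : finFieldType) (a b : option F) (t t' c s d x1 y1 z1 x2 y2 z2 : F) :
  adj10 a t c x1 y1 z1 -> adj10 b s d x1 y1 z1 ->
  adj10 b s d x2 y2 z2 -> adj10 a t' c x2 y2 z2 -> t = t'.
Proof.
case: a => [a|]; case: b => [b|] /=.
- move=> /andP[/eqP Y1 /eqP Z1] /andP[/eqP E1 /eqP E2] /andP[/eqP Y2 /eqP Z2]
    /andP[/eqP E3 /eqP E4].
  subst y1 z1 y2 z2.
  case: (eqVneq a b) => [ab|nab].
    subst b. by move: E1 E3 => /addrI -> /addrI ->.
  have key : (b-a)*(t'-t) = (a^+2*x1+2*a*t+c - (b^+2*x1+2*b*s+d))
     - (a^+2*x2+2*a*t'+c - (b^+2*x2+2*b*s+d))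
     - (a+b)*((a*x1+t - (b*x1+s)) - (a*x2+t' - (b*x2+s))) by ring.
  rewrite E2 -E4 E1 -E3 !subrr ?subr0 ?mulr0 ?subrr in key.
  move/eqP: key; rewrite mulf_eq0 subr_eq0 eq_sym (negbTE nab) /= subr_eq0.
  by move/eqP.
- move=> /andP[/eqP Y1 _] /andP[/eqP X1 /eqP E1] /andP[/eqP X2 /eqP E2]
    /andP[/eqP Y2 _].
  have : a*x1+t = a*x2+t' by rewrite -Y1 -Y2 E1 E2.
  by rewrite X1 X2 => /addrI.
- move=> /andP[/eqP X1 /eqP Y1] /andP[/eqP E1 _] /andP[/eqP E2 _]
    /andP[/eqP X2 /eqP Y2].
  by rewrite -Y1 -Y2 E1 E2 X1 X2.
- move=> /andP[_ /eqP Y1] /andP[_ /eqP E1] /andP[_ /eqP E2] /andP[_ /eqP Y2].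
  by rewrite -Y1 -Y2 E1 E2.
Qed.

Arguments L2 {F a t t' c x y z}.
Arguments L4 {F a b t t' c s d x1 y1 z1 x2 y2 z2}.

Theorem claim4 (F : finFieldType) (a : option F) (c t t' : F) :
  t != t' ->
  dist_ge (inr (a, t, c) : Bvert F) (inr (a, t', c)) 6.
Proof.
move=> tt' p; case: p => [|v1 [|v2 [|v3 [|v4 [|v5 [|v6 p]]]]]] //=.
- by move=> _ [e]; rewrite e eqxx in tt'.
- by move=> H E; subst.
- move=> H E; subst; move: H.
  case: v1 => [[[x1 y1] z1]|[[a1 b1] c1]] //=; rewrite andbT => /andP[h1 h2].
  by move: (L2 h1 h2) => e; rewrite e eqxx in tt'.
- move=> H E; subst; move: H.
  case: v1 => [[[x1 y1] z1]|[[a1 b1] c1]] //=.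
  by case: v2 => [[[x2 y2] z2]|[[a2 b2] c2]] //=; rewrite ?andbF.
- move=> H E; subst; move: H.
  case: v1 => [[[x1 y1] z1]|[[a1 b1] c1]] //=.
  case: v2 => [[[x2 y2] z2]|[[a2 b2] c2]] //=; rewrite ?andbF //.
  case: v3 => [[[x3 y3] z3]|[[a3 b3] c3]] //=; rewrite ?andbF //.
  move=> /and5P[h1 h2 h3 h4 _].
  by move: (L4 h1 h2 h3 h4) => e; rewrite e eqxx in tt'.
- move=> H E; subst; move: H.
  case: v1 => [[[x1 y1] z1]|[[a1 b1] c1]] //=.
  case: v2 => [[[x2 y2] z2]|[[a2 b2] c2]] //=; rewrite ?andbF //.
  case: v3 => [[[x3 y3] z3]|[[a3 b3] c3]] //=; rewrite ?andbF //.
  by case: v4 => [[[x4 y4] z4]|[[a4 b4] c4]] //=; rewrite ?andbF.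
Qed.
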